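(* If $\mathcal{O}$ is a set of upwards closed modalities, then for all $r,r'\in TT\mathbf{1}$ the following are equivalent: (1) $r\preccurlyeq r'$; (2) for all $A\subseteq T\mathbf{1}$, $r[\in A]\trianglelefteq r'[\in {\trianglelefteq}[A]]$; (3) for all $o\in\mathcal{O}$ and all $A\subseteq T\mathbf{1}$, $r\in o(A)$ implies $r'\in o({\trianglelefteq}[A])$.
   Context: $\Sigma$ is a signature of effect operations with arities $\alpha^n\to\alpha$, $\mathbf{N}\times\alpha^n\to\alpha$, $\alpha^{\mathbf{N}}\to\alpha$ or $\mathbf{N}\times\alpha^{\mathbf{N}}\to\alpha$. $TX$ is the set of possibly infinite labelled trees with leaves $\bot$ or elements of $X$ and internal nodes labelled by operations (or $\sigma_m$, $m\in\mathbb{N}$) with children according to arity; $t\le t'$ iff $t$ is obtained from $t'$ by replacing subtrees with $\bot$. $\mathbf{1}=\{*\}$. A set $\mathcal{O}$ of modalities is given with $[\![o]\!]\subseteq T\mathbf{1}$; $o$ is upwards closed if $[\![o]\!]$ is upward closed under $\le$. For $t\in TX$, $P\subseteq X$, $t[\in P]\in T\mathbf{1}$ replaces leaves in $P$ by $*$ and other $X$-leaves by $\bot$; $o(A)=\{t\in TX\mid t[\in A]\in[\![o]\!]\}$. $\mathcal{T}$ is the least class of formulas containing $o(\top),o(\bot)$ ($o\in\mathcal{O}$) closed under arbitrary $\bigvee,\bigwedge$, with $[\![o(\top)]\!]=o(\{*\})$, $[\![o(\bot)]\!]=o(\emptyset)$, unions/intersections. On $T\mathbf{1}$: $t\trianglelefteq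 t'$ iff $\forall\Phi\in\mathcal{T}$, $t\in[\![\Phi]\!]\Rightarrow t'\in[\![\Phi]\!]$. On $TT\mathbf{1}$: $r\preccurlyeq r'$ iff $\forall o\in\mathcal{O}\,\forall\Phi\in\mathcal{T}$, $r\in o([\![\Phi]\!])\Rightarrow r'\in o([\![\Phi]\!])$. For a relation $R$ and set $A$, $R[A]=\{y\mid\exists x\in A,\ xRy\}$. *)

(* Defs.v *)
From Stdlib Require Import ClassicalEpsilon.
Set Implicit Arguments.
Unset Strict Implicit.

(* A signature of node labels with arities: [L] is the set of labels of
   internal nodes (operations, operations paired with their N-parameter,
   and the sigma_m nodes), [ar l] indexes the children of a node labelled l
   ('I_n-like for alpha^n, nat for alpha^N). *)

CoInductive tree (L : Type) (ar : L -> Type) (X : Type) : Type :=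
| TBot : tree ar X
| TLeaf : X -> tree ar X
| TNode : forall l : L, (ar l -> tree ar X) -> tree ar X.
Arguments TBot {L ar X}.
Arguments TLeaf {L ar X} _.
Arguments TNode {L ar X} _ _.

Definition one := unit.

CoInductive tle (L : Type) (ar : L -> Type) (X : Type) : tree ar X -> tree ar X -> Prop :=
| tle_bot : forall t, tle TBot t
| tle_leaf : forall x, tle (TLeaf x) (TLeaf x)
| tle_node : forall l (k k' : ar l -> tree ar X),
    (forall p, tle (k p) (k' p)) -> tle (TNode l k) (TNode l k').

(* t[in P] : leaves in P become *, other X-leaves become bottom *)
CoFixpoint restr (L : Type) (ar : L -> Type) (X : Type) (P : X -> Prop)
  (t : tree ar X) : tree ar one :=
  match t with
  | TBot => TBot
  | TLeaf x => if excluded_middle_informative (P x) then TLeaf tt else TBot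
  | TNode l k => TNode l (fun p => restr P (k p))
  end.

(* o(A) = { t in T X | t[in A] in [[o]] }, where [[o]] = sem o *)
Definition omod (L : Type) (ar : L -> Type) (O : Type)
  (sem : O -> tree ar one -> Prop) (o : O) (X : Type) (A : X -> Prop)
  : tree ar X -> Prop :=
  fun t => sem o (restr A t).

Definition upwards_closed (L : Type) (ar : L -> Type) (O : Type)
  (sem : O -> tree ar one -> Prop) : Prop :=
  forall o t t', sem o t -> tle t t' -> sem o t'.

(* The denotations [[Phi]] of formulas Phi in the class 𝒯: least class
   containing o(top), o(bot) and closed under arbitrary joins and meets. *)
Inductive Tden (L : Type) (ar : L -> Type) (O : Type)
  (sem : O -> tree ar one -> Prop) : (tree ar one -> Prop) -> Prop :=
| Tden_top : forall o, Tden sem (omod sem o (fun _ : one => True))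
| Tden_bot : forall o, Tden sem (omod sem o (fun _ : one => False))
| Tden_join : forall (I : Type) (F : I -> tree ar one -> Prop),
    (forall i, Tden sem (F i)) -> Tden sem (fun t => exists i, F i t)
| Tden_meet : forall (I : Type) (F : I -> tree ar one -> Prop),
    (forall i, Tden sem (F i)) -> Tden sem (fun t => forall i, F i t).

Definition tri (L : Type) (ar : L -> Type) (O : Type)
  (sem : O -> tree ar one -> Prop) (t t' : tree ar one) : Prop :=
  forall Phi, Tden sem Phi -> Phi t -> Phi t'.

Definition curly (L : Type) (ar : L -> Type) (O : Type)
  (sem : O -> tree ar one -> Prop) (r r' : tree ar (tree ar one)) : Prop :=
  forall (o : O) Phi, Tden sem Phi -> omod sem o Phi r -> omod sem o Phi r'.

Definition rimage (Y : Type) (R : Y -> Y -> Prop) (A : Y -> Prop) : Y -> Prop :=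
  fun y => exists x, A x /\ R x y.

(* Main.v *)
Require Import Defs.
From Stdlib Require Import ClassicalEpsilon.
Set Implicit Arguments.
Definition frob {L} {ar : L -> Type} {X} (t : tree ar X) : tree ar X :=
  match t with TBot => TBot | TLeaf x => TLeaf x | TNode l k => TNode l k end.
Lemma frob_eq {L} {ar : L -> Type} {X} (t : tree ar X) : t = frob t.
Proof. destruct t; reflexivity. Qed.

Lemma restr_mono L (ar : L -> Type) X (P Q : X -> Prop) :
  (forall x, P x -> Q x) -> forall t : tree ar X, tle (restr P t) (restr Q t).
Proof.
  intros HPQ. cofix CH. intros t.
  rewrite (frob_eq (restr P t)), (frob_eq (restr Q t)).
  destruct t as [|x|l k]; simpl.
  - constructor.
  - destruct (excluded_middle_informative (P x)) as [p|p].
    + destruct (excluded_middle_informative (Q x)) as [q|q].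
      * constructor.
      * exfalso; auto.
    + constructor.
  - constructor. intros p. apply CH.
Qed.

Lemma restr_comp1 L (ar : L -> Type) X (A : X -> Prop) (P : one -> Prop) :
  forall t : tree ar X, tle (restr P (restr A t)) (restr (fun x => A x /\ P tt) t).
Proof.
  cofix CH. intros t.
  rewrite (frob_eq (restr P (restr A t))), (frob_eq (restr (fun x => A x /\ P tt) t)).
  destruct t as [|x|l k]; simpl.
  - constructor.
  - destruct (excluded_middle_informative (A x)) as [a|a]; simpl.
    + destruct (excluded_middle_informative (P tt)) as [p|p];
      destruct (excluded_middle_informative (A x /\ P tt)) as [q|q];
      first [apply tle_bot | apply tle_leaf | tauto].
    + constructor.
  - constructor. intros p. apply CH.
Qed.

Lemma restr_comp2 L (ar : L -> Type) X (A : X -> Prop) (P : one -> Prop) :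
  forall t : tree ar X, tle (restr (fun x => A x /\ P tt) t) (restr P (restr A t)).
Proof.
  cofix CH. intros t.
  rewrite (frob_eq (restr P (restr A t))), (frob_eq (restr (fun x => A x /\ P tt) t)).
  destruct t as [|x|l k]; simpl.
  - constructor.
  - destruct (excluded_middle_informative (A x)) as [a|a]; simpl;
    [destruct (excluded_middle_informative (P tt)) as [p|p]|];
      destruct (excluded_middle_informative (A x /\ P tt)) as [q|q];
      first [apply tle_bot | apply tle_leaf | tauto].
  - constructor. intros p. apply CH.
Qed.

Lemma sem_tr L (ar : L -> Type) O (sem : O -> tree ar one -> Prop) :
  upwards_closed sem -> forall o t t', tle t t' -> sem o t -> sem o t'.
Proof. intros H o t t' Ht Hs. exact (H o t t' Hs Ht). Qed.

Lemma Tden_up L (ar : L -> Type) O (sem : O -> tree ar one -> Prop) Phi x y :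
  Tden sem Phi -> Phi x -> tri sem x y -> Phi y.
Proof. intros H1 H2 H3. exact (H3 Phi H1 H2). Qed.

Theorem lemma4p14 (L : Type) (ar : L -> Type) (O : Type)
  (sem : O -> tree ar one -> Prop) :
  upwards_closed sem ->
  forall r r' : tree ar (tree ar one),
    (curly sem r r' <->
     (forall A : tree ar one -> Prop,
        tri sem (restr A r) (restr (rimage (tri sem) A) r'))) /\
    ((forall A : tree ar one -> Prop,
        tri sem (restr A r) (restr (rimage (tri sem) A) r')) <->
     (forall (o : O) (A : tree ar one -> Prop),
        omod sem o A r -> omod sem o (rimage (tri sem) A) r')).
Proof.
  intros Hup r r'.
  pose proof (sem_tr Hup) as ST.
  assert (I23 : (forall A : tree ar one -> Prop,
        tri sem (restr A r) (restr (rimage (tri sem) A) r')) ->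
     (forall (o : O) (A : tree ar one -> Prop),
        omod sem o A r -> omod sem o (rimage (tri sem) A) r')).
  { intros H2 o A HA. unfold omod in *.
    assert (HP : omod sem o (fun _ : one => True) (restr A r)).
    { unfold omod.
      eapply ST; [apply restr_comp2|].
      eapply ST; [apply restr_mono with (P := A); tauto|exact HA]. }
    pose proof (H2 A _ (Tden_top sem o) HP) as HQ. unfold omod in HQ.
    eapply ST; [|eapply ST; [apply restr_comp1|exact HQ]].
    apply restr_mono. tauto. }
  assert (I32 : (forall (o : O) (A : tree ar one -> Prop),
        omod sem o A r -> omod sem o (rimage (tri sem) A) r') ->
      (forall A : tree ar one -> Prop,
        tri sem (restr A r) (restr (rimage (tri sem) A) r'))).
  { intros H3 A Phi HPhi. revert A. induction HPhi; intros A.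
    - unfold omod. intros HA.
      assert (HA' : sem o (restr A r)).
      { eapply ST; [|eapply ST; [apply restr_comp1|exact HA]].
        apply restr_mono. tauto. }
      pose proof (H3 o A HA') as HQ. unfold omod in HQ.
      eapply ST; [apply restr_comp2|].
      eapply ST; [apply restr_mono with (P := rimage (tri sem) A); tauto | exact HQ].
    - unfold omod. intros HA.
      assert (HA' : sem o (restr (fun _ => False) r)).
      { eapply ST; [|eapply ST; [apply restr_comp1|exact HA]].
        apply restr_mono. tauto. }
      pose proof (H3 o _ HA') as HQ. unfold omod in HQ.
      eapply ST; [apply restr_comp2 with (A := rimage (tri sem) A)|].
      eapply ST; [|exact HQ]. apply restr_mono. intros x [y [[] _]].
    - intros [i Hi]. exists i. apply H0. exact Hi.
    - intros Hi i. apply H0. apply Hi. }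
  assert (I13 : curly sem r r' -> (forall (o : O) (A : tree ar one -> Prop),
        omod sem o A r -> omod sem o (rimage (tri sem) A) r')).
  { intros H1 o A HA. unfold omod in *.
    set (Psi := fun t => exists i : {x | A x},
       (fun t => forall j : {Phi : tree ar one -> Prop | Tden sem Phi /\ Phi (proj1_sig i)},
          proj1_sig j t) t).
    assert (HPsi : Tden sem Psi).
    { apply Tden_join. intros i. apply Tden_meet. intros j. exact (proj1 (proj2_sig j)). }
    assert (HR : sem o (restr Psi r)).
    { eapply ST; [|exact HA]. apply restr_mono. intros x Ax.
      exists (exist _ x Ax). intros j. exact (proj2 (proj2_sig j)). }
    pose proof (H1 o Psi HPsi HR) as HQ. unfold omod in HQ.
    eapply ST; [|exact HQ]. apply restr_mono.
    intros y [[x Ax] Hx]. exists x. split; [exact Ax|].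
    intros Phi HPhi HPx. exact (Hx (exist _ Phi (conj HPhi HPx))). }
  assert (I31 : (forall (o : O) (A : tree ar one -> Prop),
        omod sem o A r -> omod sem o (rimage (tri sem) A) r') -> curly sem r r').
  { intros H3 o Phi HPhi HA. pose proof (H3 o Phi HA) as HQ. unfold omod in *.
    eapply ST; [|exact HQ]. apply restr_mono.
    intros y [x [Px Hxy]]. exact (Hxy Phi HPhi Px). }
  split; split; intros H; auto.
Qed.
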